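(* There is a constant $C_1>0$ such that for all integers $r\geq1$ and $k_1,\ldots,k_r\geq2$, writing $K=k_1+\cdots+k_r$, \[ \frac{1}{2^{K}}<\sum_{n_1\geq\cdots\geq n_r\geq2}\frac{1}{n_1^{k_1}\cdots n_r^{k_r}}\leq\frac{C_1}{2^{K}},\qquad \frac{1}{2^{K+1}}<\sum_{n_1\geq\cdots\geq n_{r+1}\geq2}\frac{1}{n_1^{k_1}\cdots n_r^{k_r}\,n_{r+1}}\leq\frac{C_1}{2^{K}}. \]
   Context: The constant $C_1$ is independent of $r$ and $k_1,\ldots,k_r$. *)

(* Defs.v *)
From HB Require Import structures.
From mathcomp Require Import all_boot all_order all_algebra.
From mathcomp Require Import all_classical all_reals all_analysis.
Unset Printing Implicit Defensive.
Import Order.TTheory GRing.Theory Num.Theory.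
Local Open Scope classical_set_scope.
Local Open Scope ring_scope.

Definition chain_idx (r : nat) : set ('I_r -> nat) :=
  [set n | (forall i j : 'I_r, (i <= j)%N -> (n j <= n i)%N) /\
           (forall i : 'I_r, (2 <= n i)%N)].

Definition chain_sum (R : realType) (r : nat) (e : 'I_r -> nat) : \bar R :=
  (\esum_(n in chain_idx r) ((\prod_(i < r) ((n i)%:R ^+ e i))^-1)%:E)%R.

(* exponent vector (k_1,...,k_r,1) of length r+1 *)
Definition ext1 (r : nat) (k : 'I_r -> nat) : 'I_r.+1 -> nat :=
  fun i => match unlift ord_max i with Some j => k j | None => 1%N end.

(* Main.v *)
Require Import Defs.
From HB Require Import structures.
From mathcomp Require Import all_boot all_order all_algebra.
From mathcomp Require Import all_classical all_reals all_analysis.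
From mathcomp Require Import ring lra.
Import Order.TTheory GRing.Theory Num.Theory.
Local Open Scope ring_scope.
Local Open Scope classical_set_scope.

Section Ar.
Variable R : realType.

Definition wt (n : nat) : R := 4 / (n%:R ^+ 2).
Definition VV (m : nat) : R := 6 * (m%:R * (m%:R - 1)) / ((m%:R + 1) * (m%:R + 2)).
Definition Hh (m : nat) : R := \sum_(b < m.+1) (if (2 <= b)%N then (b%:R)^-1 else 0).

Lemma wt_ge0 n : 0 <= wt n.
Proof. by rewrite /wt divr_ge0 // exprn_ge0. Qed.

Lemma VV_ge0 m : 0 <= VV m.
Proof.
case: m => [|m]; first by rewrite /VV mul0r mulr0 mul0r.
have x1 : (1:R) <= m.+1%:R by rewrite (ler_nat R 1 m.+1).
rewrite /VV divr_ge0 //; nra.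
Qed.

Lemma VV_le6 m : VV m <= 6.
Proof.
rewrite /VV; have x0 : (0 : R) <= m%:R by [].
rewrite ler_pdivrMr; last by apply: mulr_gt0; lra.
nra.
Qed.

Lemma VV_ge1 m : (2 <= m)%N -> 1 <= VV m.
Proof.
move=> m2; rewrite /VV; have x2 : (2 : R) <= m%:R by rewrite (ler_nat R 2 m).
rewrite ler_pdivlMr; last by apply: mulr_gt0; lra.
nra.
Qed.

Lemma sumVV m : \sum_(a < m.+1) wt a * VV a = VV m.
Proof.
elim: m => [|m IH]; first by rewrite big_ord1 /VV /= mul0r mulr0 mul0r mulr0.
rewrite big_ord_recr /= IH /wt /VV -natr1.
have x0 : (0 : R) <= m%:R by [].
field.
by rewrite !lt0r_neq0 //; lra.
Qed.

Lemma Hh_ge0 m : 0 <= Hh m.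
Proof. by rewrite /Hh sumr_ge0 // => i _; case: ifP. Qed.

Lemma HhS m : Hh m.+2 = Hh m.+1 + (m.+2%:R)^-1.
Proof. by rewrite /Hh big_ord_recr /=. Qed.

Lemma key (h x : R) : 0 <= h -> 1 <= x ->
  (h + (x + 1)^-1) / (x + 1) ^+ 2 + (h + (x + 1)^-1 + 1) / (x + 1) <= (h + 1) / x.
Proof.
move=> h0 x1.
have E : (h + 1) / x - ((h + (x + 1)^-1) / (x + 1) ^+ 2 + (h + (x + 1)^-1 + 1) / (x + 1))
   = ((h + 1) * (x + 1) - x) / (x * (x + 1) ^+ 3).
  field; apply/andP; split; apply: lt0r_neq0; lra.
rewrite -subr_ge0 E divr_ge0 //; first nra.
by apply: mulr_ge0; [lra | apply: exprn_ge0; lra].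
Qed.

Lemma harm_aux m : (1 <= m)%N ->
  \sum_(a < m.+1) (if (2 <= a)%N then Hh a / (a%:R ^+ 2) else 0) + (Hh m + 1) / m%:R <= 1.
Proof.
elim: m => [//|m IH] _.
case: m IH => [|m] IH.
  by rewrite /Hh !big_ord_recr !big_ord0 /= !add0r divr1.
rewrite big_ord_recr /= -addrA.
apply: le_trans (IH isT); rewrite lerD2l.
rewrite HhS -[(m.+2)%:R]natr1 .
have := @key _ _ (Hh_ge0 m.+1) (_ : 1 <= m.+1%:R).
by apply; rewrite (ler_nat R 1 m.+1).
Qed.

Lemma harm m : \sum_(a < m.+1) (if (2 <= a)%N then wt a * Hh a else 0) <= 4.
Proof.
case: m => [|m]; first by rewrite big_ord1.
have := @harm_aux m.+1 isT.
rewrite (eq_bigr (fun a : 'I_m.+2 => 4^-1 * (if (2 <= a)%N then wt a * Hh a else 0))); last first.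
  move=> i _; case: ifP => _; last by rewrite mulr0.
  by rewrite /wt mulrA mulrA mulVf // mul1r mulrC.
rewrite -mulr_sumr => H.
have : 4^-1 * \sum_(a < m.+2) (if (2 <= a)%N then wt a * Hh a else 0) <= 1.
  apply: le_trans H; rewrite lerDl divr_ge0 //.
  by apply: addr_ge0 => //; apply: Hh_ge0.
by rewrite ler_pdivrMl // mulr1.
Qed.

End Ar.

Definition ccons (r : nat) (a : nat) (t : 'I_r -> nat) : 'I_r.+1 -> nat :=
  fun i => if unlift ord0 i is Some j then t j else a.
Definition ctail (r : nat) (n : 'I_r.+1 -> nat) : 'I_r -> nat :=
  fun j => n (lift ord0 j).
Definition chain_le (r m : nat) : set ('I_r -> nat) :=
  [set n | chain_idx r n /\ forall i, (n i <= m)%N].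
Arguments ccons {r}. Arguments ctail {r}.

Lemma ccons0 r a (t : 'I_r -> nat) : ccons a t ord0 = a.
Proof. by rewrite /ccons unlift_none. Qed.
Lemma cconsS r a (t : 'I_r -> nat) j : ccons a t (lift ord0 j) = t j.
Proof. by rewrite /ccons liftK. Qed.
Lemma ctail_cons r a (t : 'I_r -> nat) : ctail (ccons a t) = t.
Proof. by apply: funext => j; rewrite /ctail cconsS. Qed.
Lemma cons_tail r (n : 'I_r.+1 -> nat) : ccons (n ord0) (ctail n) = n.
Proof.
apply: funext => i; rewrite /ccons /ctail.
by case: unliftP => [j ->|->].
Qed.

Lemma chain_le_peel r m :
  chain_le r.+1 m =
  (fun p : nat * ('I_r -> nat) => ccons p.1 p.2) @`
     (`I_m.+1 `*`` (fun a => [set t | (2 <= a)%N /\ chain_le r a t])).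
Proof.
apply/seteqP; split => [n [[mono ge2] lem]|_ [[a t] [/= am [a2 [[mono ge2] lea]]] <-]].
  exists (n ord0, ctail n); last exact: cons_tail.
  split => /=; first exact: lem.
  split; first exact: ge2.
  split; last by move=> j; apply: mono.
  split => [i j ij|j]; last exact: ge2.
  by apply: mono; rewrite /= /bump /= !add1n ltnS.
split; last first.
  move=> i; case: (unliftP ord0 i) => [j ->|->]; rewrite ?cconsS ?ccons0.
    by apply: leq_trans (lea j) _; rewrite -ltnS.
  by rewrite -ltnS.
split => [i j ij|i]; last first.
  by case: (unliftP ord0 i) => [j ->|->]; rewrite ?cconsS ?ccons0.
move: ij; case: (unliftP ord0 i) => [i' ->|->]; case: (unliftP ord0 j) => [j' ->|->];
  rewrite ?cconsS ?ccons0 //= /bump /=.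
- by move=> ij; apply: mono.
Qed.

Section S.
Variable R : realType.
Local Open Scope ereal_scope.

Lemma esum_peel r m (G : ('I_r.+1 -> nat) -> \bar R) : (forall n, 0 <= G n) ->
  \esum_(n in chain_le r.+1 m) G n =
  (\sum_(a < m.+1) \esum_(t in [set t | (2 <= a)%N /\ chain_le r a t]) G (ccons a t))%R.
Proof.
move=> G0; rewrite chain_le_peel esum_image; last first.
  move=> [a t] [b u] _ _ /= E.
  have Ea : a = b by have := congr1 (fun f => f ord0) E; rewrite /= !ccons0.
  have Et : t = u by have := congr1 ctail E; rewrite !ctail_cons.
  by rewrite Ea Et.
rewrite -(@esum_esum _ _ _ `I_m.+1
  (fun a => [set t | (2 <= a)%N /\ chain_le r a t]) (fun a t => G (ccons a t))) //.
rewrite esum_fset; last by move=> *; apply: esum_ge0.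
  by rewrite (fsbig_ord _ _ (fun a => \esum_(t in [set t | (2 <= a)%N /\ chain_le r a t]) G (ccons a t))).

exact: finite_II.
Qed.


Lemma step r (F0 : ('I_r -> nat) -> R) (F1 : ('I_r.+1 -> nat) -> R)
  (u : nat -> R) (B : nat -> R) :
  (forall t, (0 <= F0 t)%R) -> (forall a, (0 <= u a)%R) ->
  (forall n, F1 n = u (n ord0) * F0 (ctail n))%R ->
  (forall a k, (2 <= a)%N -> (0 <= k)%R ->
     \esum_(t in chain_le r a) (k * F0 t)%:E <= (k * B a)%:E) ->
  forall m k, (0 <= k)%R ->
  \esum_(n in chain_le r.+1 m) (k * F1 n)%:E <=
     (k * \sum_(a < m.+1 | (2 <= a)%N) u a * B a)%:E.
Proof.
move=> F00 u0 F1E hB m k k0.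
rewrite esum_peel; last by move=> n; rewrite lee_fin F1E mulr_ge0 // mulr_ge0.
rewrite mulr_sumr -sumEFin.
rewrite [leRHS]big_mkcond /=.
apply: lee_sum; move=> a _.
case: (ltnP 1 a) => a2.
  rewrite (_ : [set t | true /\ chain_le r a t] = chain_le r a); last first.
    by apply/seteqP; split => t /= => [[]//|?]; split.
  rewrite (eq_esum (b := fun t => ((k * u a) * F0 t)%:E)); last first.
    by move=> t _; rewrite F1E ccons0 ctail_cons mulrA.
  by rewrite mulrA; apply: hB => //; rewrite mulr_ge0.
rewrite (_ : [set t | false /\ chain_le r a t] = set0); last first.
  by apply/seteqP; split => t //= [].
by rewrite esum_set0.
Qed.


Lemma esum_unb r (f : ('I_r -> nat) -> \bar R) X :
  (forall m, (2 <= m)%N -> \esum_(n in chain_le r m) f n <= X) ->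
  \esum_(n in chain_idx r) f n <= X.
Proof.
move=> H; apply: ge_ereal_sup => _ [S [finS SI] <-].
pose M := maxn 2 (\max_(x <- (finmap.enum_fset (fset_set S))) \max_(i < r) x i).
apply: le_trans (H M (leq_maxl _ _)).
apply: ereal_sup_ubound; exists S => //; split => // n Sn; split; first exact: SI.
move=> i; rewrite /M; apply: leq_trans (leq_maxr _ _).
apply: leq_trans (leq_bigmax_seq (F := fun x => \max_(i < r) x i) n _ _) => //.
  exact: (leq_bigmax (F := fun i => n i)).
by rewrite in_fset_set // inE.
Qed.


Definition T1 r (n : 'I_r -> nat) : R := (\prod_(i < r) wt R (n i))%R.
Definition T2 r (n : 'I_r.+1 -> nat) : R :=
  ((\prod_(i < r) wt R (n (widen_ord (leqnSn r) i))) * ((n ord_max)%:R)^-1)%R.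
Arguments T1 {r}. Arguments T2 {r}.

Lemma T1S r (n : 'I_r.+1 -> nat) : T1 n = (wt R (n ord0) * T1 (ctail n))%R.
Proof. by rewrite /T1 big_ord_recl. Qed.

Lemma T10 (n : 'I_0 -> nat) : T1 n = 1%R.
Proof. by rewrite /T1 big_ord0. Qed.

Lemma T20 (n : 'I_1 -> nat) : T2 n = (((n ord0)%:R)^-1 * T1 (ctail n))%R.
Proof.
rewrite /T2 big_ord0 T10 mul1r mulr1.
by have -> : (ord_max : 'I_1) = ord0 by apply: val_inj.
Qed.

Lemma T2S r (n : 'I_r.+2 -> nat) : T2 n = (wt R (n ord0) * T2 (ctail n))%R.
Proof.
rewrite /T2 big_ord_recl mulrA /ctail.
have -> : widen_ord (leqnSn r.+1) ord0 = ord0 by apply: val_inj.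
have -> : (ord_max : 'I_r.+2) = lift ord0 ord_max by apply: val_inj.
congr (_ * _ * _)%R; apply: eq_bigr => i _; congr (wt R (n _)).
by apply: val_inj; rewrite /= /bump /=.
Qed.

Lemma chain_le0 m : chain_le 0 m = [set (fun _ : 'I_0 => 0%N)].
Proof.
apply/seteqP; split => n /=.
  by move=> _; apply: funext => -[].
by move=> ->; split; [split => -[] | case].
Qed.

Lemma B1 r m k : (2 <= m)%N -> (0 <= k)%R ->
  \esum_(n in chain_le r m) (k * T1 n)%:E <= (k * VV R m)%:E.
Proof.
elim: r m k => [|r IH] m k m2 k0.
  rewrite chain_le0 esum_set1 /T1 ?big_ord0; last by rewrite mulr1 lee_fin.
  by rewrite mulr1 lee_fin -[X in (X <= _)%R]mulr1 ler_wpM2l // VV_ge1.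
apply: le_trans (@step r (@T1 r) (@T1 r.+1) (wt R) (VV R) _ _ _ _ m k k0) _.
- by move=> t; rewrite /T1 prodr_ge0 // => i _; apply: wt_ge0.
- by move=> a; apply: wt_ge0.
- exact: T1S.
- by move=> a k' a2 k'0; apply: IH.
rewrite lee_fin ler_wpM2l // -(sumVV R m) big_mkcond /=.
apply: ler_sum => i _; case: ifP => // _.
by rewrite mulr_ge0 ?wt_ge0 ?VV_ge0.
Qed.

Lemma B2a m k : (0 <= k)%R ->
  \esum_(n in chain_le 1 m) (k * T2 n)%:E <= (k * Hh R m)%:E.
Proof.
move=> k0; apply: le_trans (@step 0 (@T1 0) (@T2 0) (fun a => (a%:R)^-1)%R (fun=> 1%R) _ _ _ _ m k k0) _.
- by move=> t; rewrite /T1 big_ord0.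
- by move=> a; rewrite invr_ge0.
- exact: T20.
- move=> a k' a2 k'0; rewrite chain_le0 esum_set1 /T1 ?big_ord0 ?mulr1 //.
rewrite lee_fin ler_wpM2l // /Hh big_mkcond /=; apply: ler_sum => i _; case: ifP => _; by rewrite ?mulr1.
Qed.

Lemma B2b m k : (2 <= m)%N -> (0 <= k)%R ->
  \esum_(n in chain_le 2 m) (k * T2 n)%:E <= (k * (4 * VV R m))%:E.
Proof.
move=> m2 k0; apply: le_trans (@step 1 (@T2 0) (@T2 1) (wt R) (Hh R) _ _ _ _ m k k0) _.
- by move=> t; rewrite T20 /T1 big_ord0 mulr1 invr_ge0.
- by move=> a; apply: wt_ge0.
- exact: T2S.
- by move=> a k' a2 k'0; apply: B2a.
rewrite lee_fin ler_wpM2l // big_mkcond /=.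
apply: le_trans (harm R m) _.
by rewrite -[X in (X <= _)%R]mulr1 ler_wpM2l // VV_ge1.
Qed.

Lemma B2 r m k : (2 <= m)%N -> (0 <= k)%R ->
  \esum_(n in chain_le r.+2 m) (k * T2 n)%:E <= (k * (4 * VV R m))%:E.
Proof.
elim: r m k => [|r IH] m k m2 k0; first exact: B2b.
apply: le_trans (@step r.+2 (@T2 r.+1) (@T2 r.+2) (wt R) (fun a => 4 * VV R a)%R _ _ _ _ m k k0) _.
- move=> t; rewrite /T2 mulr_ge0 ?invr_ge0 //.
  by rewrite prodr_ge0 // => i _; apply: wt_ge0.
- by move=> a; apply: wt_ge0.
- exact: T2S.
- by move=> a k' a2 k'0; apply: IH.
rewrite lee_fin ler_wpM2l // -(sumVV R m) mulr_sumr big_mkcond /=.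
apply: ler_sum => i _; case: ifP => _.
  by rewrite mulrCA.
by rewrite mulr_ge0 // mulr_ge0 ?wt_ge0 ?VV_ge0.
Qed.

End S.
Arguments T1 {R r}. Arguments T2 {R r}.

Section P.
Variable R : realType.

Lemma fac (n e : nat) : (2 <= n)%N -> (2 <= e)%N ->
  (((n%:R : R) ^+ e)^-1 <= (2 ^+ e)^-1 * wt R n)%R.
Proof.
move=> n2 e2; rewrite /wt.
have x2 : (2 : R) <= n%:R by rewrite (ler_nat R 2 n).
case: e e2 => [|[|j]] // _.
rewrite -[j.+2]addn2 !exprD.
have n0 : (n%:R : R) != 0 by apply: lt0r_neq0; lra.
have -> : ((2 : R) ^+ j * 2 ^+ 2)^-1 * (4 / n%:R ^+ 2) = (2 ^+ j * n%:R ^+ 2)^-1.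
  by field; rewrite n0 expf_neq0.
rewrite lef_pV2 ?posrE; last 2 first.
- by apply: mulr_gt0; apply: exprn_gt0; lra.
- by apply: mulr_gt0; apply: exprn_gt0; lra.
rewrite ler_wpM2r ?exprn_ge0 //; first (apply: lerXn2r; rewrite ?nnegrE //); lra.
Qed.


Lemma PW1 r (e n : 'I_r -> nat) : (forall i, (2 <= e i)%N) -> (forall i, (2 <= n i)%N) ->
  ((\prod_(i < r) ((n i)%:R : R) ^+ e i)^-1 <= (2 ^+ (\sum_(i < r) e i))^-1 * T1 n)%R.
Proof.
move=> e2 n2; rewrite -prodrXr -!prodfV /T1 -big_split /=.
apply: ler_prod => i _; rewrite invr_ge0 exprn_ge0 //=.
exact: fac.
Qed.

Lemma ext1_widen r (k : 'I_r -> nat) i : ext1 r k (widen_ord (leqnSn r) i) = k i.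
Proof.
rewrite /ext1.
have -> : widen_ord (leqnSn r) i = lift ord_max i.
  by apply: val_inj; rewrite /= /bump leqNgt ltn_ord.
by rewrite liftK.
Qed.

Lemma ext1_max r (k : 'I_r -> nat) : ext1 r k ord_max = 1%N.
Proof. by rewrite /ext1 unlift_none. Qed.

Lemma sum_ext1 r (k : 'I_r -> nat) :
  (\sum_(i < r.+1) ext1 r k i = (\sum_(i < r) k i).+1)%N.
Proof.
rewrite big_ord_recr /= ext1_max addn1; congr (_.+1).
by apply: eq_bigr => i _; rewrite ext1_widen.
Qed.

Lemma PW2 r (k : 'I_r -> nat) (n : 'I_r.+1 -> nat) :
  (forall i, (2 <= k i)%N) -> (forall i, (2 <= n i)%N) ->
  ((\prod_(i < r.+1) ((n i)%:R : R) ^+ ext1 r k i)^-1 <=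
     (2 ^+ (\sum_(i < r) k i))^-1 * T2 n)%R.
Proof.
move=> k2 n2; rewrite big_ord_recr /= ext1_max expr1 invfM /T2 mulrA.
apply: ler_pM.
- by rewrite invr_ge0 prodr_ge0 // => i _; rewrite exprn_ge0.
- by rewrite invr_ge0.
- have := @PW1 r k (fun i => n (widen_ord (leqnSn r) i)) k2 (fun i => n2 _).
  congr ((_^-1)%R <= _)%R; apply: eq_bigr => i _.
  by rewrite ext1_widen.
- by [].
Qed.

Lemma LB r (e : 'I_r.+1 -> nat) :
  ((((\prod_(i < r.+1) (2 : R) ^+ e i)^-1)%:E) < chain_sum R r.+1 e)%E.
Proof.
pose c2 := fun _ : 'I_r.+1 => 2%N.
pose c3 := fun i : 'I_r.+1 => if (val i == 0)%N then 3%N else 2%N.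
pose tm := fun n : 'I_r.+1 -> nat => ((\prod_(i < r.+1) ((n i)%:R : R) ^+ e i)^-1)%R.
have tm3 : (0 < tm c3)%R.
  rewrite /tm invr_gt0 prodr_gt0 // => i _; rewrite exprn_gt0 //.
  by rewrite /c3; case: ifP.
have ne : c2 <> c3.
  by move=> /(congr1 (fun f => f ord0)); rewrite /c2 /c3 /=.
have H : ((tm c2 + tm c3)%:E <= chain_sum R r.+1 e)%E.
  apply: esum_ge; exists ([set c2] `|` [set c3]).
    split; first by rewrite finite_setU; split; apply: finite_set1.
    move=> x [] -> /=; split.
    - by [].
    - by [].
    - move=> i j ij; rewrite /c3; case: eqP => [j0|]; case: eqP => [i0|] //.
      by move: ij; rewrite j0 leqn0 => /eqP.
    - by move=> i; rewrite /c3; case: ifP.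
  rewrite fsbigU; last 3 first.
  - exact: finite_set1.
  - exact: finite_set1.
  - by move=> x [/= -> E]; exfalso; apply: ne.
  by rewrite !fsbig_set1.
apply: lt_le_trans H; rewrite lte_fin /tm /c2.
by rewrite ltrDl.
Qed.

End P.

Theorem lemma4p3 (R : realType) :
  exists C1 : R, 0 < C1 /\
  forall (r : nat) (k : 'I_r -> nat),
    (1 <= r)%N -> (forall i, (2 <= k i)%N) ->
    let K := (\sum_(i < r) k i)%N in
    (((2 ^+ K)^-1)%:E < chain_sum R r k)%E /\
    (chain_sum R r k <= (C1 / 2 ^+ K)%:E)%E /\
    (((2 ^+ K.+1)^-1)%:E < chain_sum R r.+1 (ext1 r k))%E /\
    (chain_sum R r.+1 (ext1 r k) <= (C1 / 2 ^+ K)%:E)%E.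
Proof.
exists 24; split; first by rewrite ltr0n.
case=> [|r] k r1 k2 K; first by [].
have c0 : (0 : R) <= (2 ^+ K)^-1 by rewrite invr_ge0 exprn_ge0.
split; [|split; [|split]].
- by have := @LB R r k; rewrite prodrXr.
- apply: (@le_trans _ _ (\esum_(n in chain_idx r.+1) ((2 ^+ K)^-1 * T1 n)%:E)%E).
    by apply: le_esum => n [_ n2]; rewrite lee_fin; apply: PW1.
  apply: esum_unb => m m2; apply: le_trans (@B1 R r.+1 m _ m2 c0) _; rewrite lee_fin.
  have := VV_le6 R m; have := VV_ge0 R m; rewrite mulrC; nra.
- by have := @LB R r.+1 (ext1 r.+1 k); rewrite prodrXr sum_ext1.
- apply: (@le_trans _ _ (\esum_(n in chain_idx r.+2) ((2 ^+ K)^-1 * T2 n)%:E)%E).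
    by apply: le_esum => n [_ n2]; rewrite lee_fin; apply: PW2.
  apply: esum_unb => m m2; apply: le_trans (@B2 R r m _ m2 c0) _; rewrite lee_fin.
  have := VV_le6 R m; have := VV_ge0 R m; rewrite mulrC; nra.
Qed.
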